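(* If $G$ is a topological group and $X$ is a $G^\star$-regular space, then $l^*(X)\le t(C_p(X,G))$.
   Context: All spaces are Tychonoff and non-empty; topological groups are Hausdorff; $e$ is the identity of $G$. $C_p(X,G)$ is the group of continuous maps $X\to G$ with pointwise operations and the topology of pointwise convergence. $X$ is $G^\star$-regular if there exists $g\in G\setminus\{e\}$ such that for every closed $F\subseteq X$ and every $x\in X\setminus F$ there is $f\in C_p(X,G)$ with $f(x)=g$ and $f(F)\subseteq\{e\}$. $t(\cdot)$ denotes tightness, $l(\cdot)$ the Lindel\''of number, and $l^*(X)=\sup\{l(X^n):n\in\mathbb{N}\}$. *)

(* Defs.v *)
From HB Require Import structures.
From mathcomp Require Import all_boot all_order all_algebra.
From mathcomp Require Import all_classical all_reals.
From mathcomp Require Import topology function_spaces.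
From mathcomp Require Import Rstruct Rstruct_topology.
Set Implicit Arguments. Unset Strict Implicit. Unset Printing Implicit Defensive.
Local Open Scope classical_set_scope.
Local Open Scope card_scope.

Definition tychonoff_space (X : topologicalType) : Prop :=
  hausdorff_space X /\
  forall (F : set X) (x : X), closed F -> ~ F x ->
    exists f : X -> Rdefinitions.R,
      continuous f /\ f x = 0%R /\ (forall y, F y -> f y = 1%R).

Definition topological_group (G : topologicalType)
  (mul : G -> G -> G) (inv : G -> G) (e : G) : Prop :=
  [/\ (forall x y z, mul x (mul y z) = mul (mul x y) z),
      (forall x, mul e x = x /\ mul x e = x),
      (forall x, mul (inv x) x = e /\ mul x (inv x) = e),
      continuous (fun p : G * G => mul p.1 p.2) /\ continuous inv
    & hausdorff_space G].

Definition Cp_set (X G : topologicalType) : set {ptws X -> G} :=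
  [set f | continuous (f : X -> G)].

Definition Gstar_regular (X G : topologicalType) (e : G) : Prop :=
  exists g : G, g <> e /\
    forall (F : set X) (x : X), closed F -> ~ F x ->
      exists f : X -> G, continuous f /\ f x = g /\ (forall y, F y -> f y = e).

(* Cardinals are represented by types: "|A| <= |K|" is A #<= [set: K].
   "K is infinite" means [set: nat] #<= [set: K]. *)
Definition infinite_type (K : Type) : Prop := [set: nat] #<= [set: K].

(* t(S) <= |K| for the subspace S of Y (closure in the subspace S
   is the trace on S of the closure in Y). *)
Definition tightness_le (Y : topologicalType) (S : set Y) (K : Type) : Prop :=
  forall (A : set Y) (y : Y), A `<=` S -> S y -> closure A y ->
    exists B : set Y, [/\ B `<=` A, B #<= [set: K] & closure B y].

Definition lindelof_le (Y : topologicalType) (K : Type) : Prop :=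
  forall C : set (set Y), (forall U, C U -> open U) ->
    \bigcup_(U in C) U = [set: Y] ->
    exists C' : set (set Y),
      [/\ C' `<=` C, C' #<= [set: K] & \bigcup_(U in C') U = [set: Y]].

Definition power_space (X : topologicalType) (n : nat) : topologicalType :=
  {ptws 'I_n -> X}.
Arguments Cp_set : clear implicits.

(* Main.v *)
Require Import Defs.
From HB Require Import structures.
From mathcomp Require Import all_boot all_order all_algebra.
From mathcomp Require Import all_classical all_reals.
From mathcomp Require Import topology function_spaces.
From mathcomp Require Import wochoice zify.
Set Implicit Arguments. Unset Strict Implicit. Unset Printing Implicit Defensive.
Local Open Scope classical_set_scope.
Local Open Scope card_scope.

Lemma card_le_fun T U (u0 : U) (A : set T) (B : set U) : A #<= B ->
  exists f : T -> U, (forall x, A x -> B (f x)) /\ {in A &, injective f}.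
Proof.
move/card_leP=> [g]. exists (valLR u0 g). split.
  move=> x Ax; exact: (@funS _ _ _ _ (valLRfun u0 g) x Ax).
apply: (proj2 (valLR_injP u0 g)) => x y.
by apply: (@inj _ _ _ g); rewrite inE.
Qed.

Lemma fun_card_le T U (A : set T) (B : set U) (f : T -> U) :
  (forall x, A x -> B (f x)) -> {in A &, injective f} -> A #<= B.
Proof.
move=> fAB finj.
have : $|{injfun A >-> B}| by apply/injfunPex; exists f.
by case=> F; exact: inj_card_le F.
Qed.
Section KN.
Variable K : Type.
Let T := {classic (set K * (K * nat -> K))%type}.
Let good (p : T) := (forall k m, p.1 k -> p.1 (p.2 (k, m))) /\
  (forall a b, p.1 a.1 -> p.1 b.1 -> p.2 a = p.2 b -> a = b).
Let R : rel T := fun p q => `[< p.1 `<=` q.1 /\ forall k m, p.1 k -> p.2 (k, m) = q.2 (k, m) >].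
Let S : {pred T} := fun p => `[< good p >].

Lemma zorn_KN : {z : T | good z & forall q, good q -> R z q -> q.1 `<=` z.1}.
Proof.
have := @Zorn's_lemma T R S.
case.
- by move=> p _; apply/asboolP; split.
- move=> q p r _ _ _ /asboolP[pq1 pq2] /asboolP[qr1 qr2]; apply/asboolP; split.
    by move=> k /pq1 /qr1.
  by move=> k m pk; rewrite pq2 // qr2 //; exact: pq1.
- move=> C sCS /wo_chainW Cch.
  pose Ss := [set k | exists p, p \in C /\ p.1 k].
  pose phi := fun a : K * nat => match pselect (exists p, p \in C /\ p.1 a.1) with
     | left h => (projT1 (cid h)).2 a | right _ => a.1 end.
  have agree p a : p \in C -> p.1 a.1 -> phi a = p.2 a.
    case: a => k m pC pa; rewrite /phi; case: pselect => [h|[]]; last by exists p.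
    case: (cid h) => q [qC qa] /=.
    by case/orP: (Cch p q pC qC) => /asboolP[_ H]; rewrite H.
  exists ((Ss, phi) : T).
    apply/asboolP; split => /=.
      move=> k m [p [pC pk]]; exists p; split => //.
      rewrite (agree p) //; have /asboolP[H _] := sCS p pC; exact: H.
    move=> a b [p [pC pa]] [q [qC qb]].
    wlog : p q a b pC qC pa qb / R p q.
      move=> W; case/orP: (Cch p q pC qC) => Hpq; first exact: W Hpq.
      by move=> ab; apply/esym; apply: (W q p b a) => //; apply/esym.
    move=> /asboolP[pq1 pq2].
    rewrite (agree q a qC (pq1 _ pa)) (agree q b qC qb).
    have /asboolP[_ H] := sCS q qC; apply: H => //; exact: pq1.
  move=> p pC; apply/asboolP; split => /=.
    by move=> k pk; exists p.
  by move=> k m pk; rewrite (agree p).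
- move=> z zS zmax; exists z; first by move/asboolP: zS.
  move=> q gq zq; have /asboolP[] := zmax q (asboolT gq) zq; done.
Qed.
End KN.
Lemma nat_pair_inj : exists p : nat * nat -> nat, injective p.
Proof.
have /card_eqPle[le _] := card_nat2.
have [p [_ pinj]] := card_le_fun 0 le.
by exists p => a b; apply: pinj; rewrite inE.
Qed.

Lemma inhabited_inf (K : Type) : [set: nat] #<= [set: K] -> exists k : K, True.
Proof.
move=> infK; apply: contrapT => nK.
have K0 : [set: K] = set0 by apply/seteqP; split => // k _; apply: nK; exists k.
by move: infK; rewrite K0 => /card_le0P/seteqP[/(_ 0%N I)].
Qed.

Lemma KxN (K : Type) : [set: nat] #<= [set: K] -> exists f : K * nat -> K, injective f.
Proof.
move=> infK; have [k0 _] := inhabited_inf infK.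
have [pr prinj] := nat_pair_inj.
have [[Sz phi] [phih phiinj] zmax] := zorn_KN K.
simpl in phih, phiinj, zmax.
have finC : finite_set (~` Sz).
  apply: contrapT => /infiniteP infC.
  have [h [hC hinj]] := card_le_fun k0 infC.
  pose S' := Sz `|` range h.
  pose phi' := fun a : K * nat => if pselect (Sz a.1) then phi a else
     match pselect (exists n, h n = a.1) with
     | left e => h (pr (projT1 (cid e), a.2)) | right _ => a.1 end.
  have hS n : ~ Sz (h n) by apply: hC.
  have hi n m : h n = h m -> n = m by move=> /hinj; apply; rewrite inE.
  have key : S' `<=` Sz.
    have := zmax (S', phi'); move=> Z; apply: Z; last first.
      apply/asboolP; split => [k Sk|k m Sk]; first by left.
      by rewrite /= /phi' /=; destruct (pselect (Sz k)).
    split.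
      move=> k m [Sk|[n _ <-]]; rewrite /= /phi' /=.
        by destruct (pselect (Sz k)) => //; left; apply: phih.
      destruct (pselect (Sz (h n))) as [Hn|nHn]; first by case: (hS n Hn).
      destruct (pselect (exists n0, h n0 = h n)) as [e|ne]; last by case: ne; exists n.
      by right; exists (pr (projT1 (cid e), m)).
    move=> [k1 m1] [k2 m2] H1 H2; simpl in H1, H2; rewrite /= /phi' /=.
    destruct (pselect (Sz k1)) as [S1|S1]; destruct (pselect (Sz k2)) as [S2|S2] => /=.
    - by apply: phiinj.

    - destruct (pselect (exists n, h n = k2)) as [e2|ne]; last by case: ne; case: H2 => // -[n _ <-]; exists n.
      by move=> E; exfalso; apply: (hS (pr (projT1 (cid e2), m2))); rewrite -E; apply: (phih k1 m1).
    - destruct (pselect (exists n, h n = k1)) as [e1|ne]; last by case: ne; case: H1 => // -[n _ <-]; exists n.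
      by move=> E; exfalso; apply: (hS (pr (projT1 (cid e1), m1))); rewrite E; apply: (phih k2 m2).
    - destruct (pselect (exists n, h n = k1)) as [e1|ne]; last by case: ne; case: H1 => // -[n _ <-]; exists n.
      destruct (pselect (exists n, h n = k2)) as [e2|ne]; last by case: ne; case: H2 => // -[n _ <-]; exists n.
      case: (cid e1) => n1 /= <-; case: (cid e2) => n2 /= <-.
      by move=> /hi /prinj [-> ->].
  by apply: (hS 0%N); apply: key; right; exists 0%N.
have infS : ~ finite_set Sz.
  move=> finS; have : finite_set [set: K].
    by rewrite -(setUv Sz) finite_setU; split.
  by rewrite finite_setPn.
have [s0 Ss0] := infinite_setN0 infS.
have [c [_ cinj]] := card_le_fun 0%N (finite_set_countable finC).
pose psi := fun a : K * nat => if pselect (Sz a.1) then phi (a.1, 2 * a.2)%N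
  else phi (s0, (2 * pr (c a.1, a.2)).+1).
exists psi => -[k1 m1] [k2 m2]; rewrite /psi /=.
destruct (pselect (Sz k1)) as [S1|S1]; destruct (pselect (Sz k2)) as [S2|S2] => /=.
- by move/phiinj => /= /(_ S1 S2) [-> E]; congr pair; lia.
- by move/phiinj => /= /(_ S1 Ss0) [_ E]; lia.
- by move/phiinj => /= /(_ Ss0 S2) [_ E]; lia.
- move/phiinj => /= /(_ Ss0 Ss0) [E']; have /prinj [E ->] : pr (c k1, m1) = pr (c k2, m2) by lia.
  by rewrite (cinj _ _ _ _ E) // inE.
Qed.
Lemma ptws_nbhs_proj (U : eqType) (V : topologicalType) (h : {ptws U -> V}) t (W : set V) :
  nbhs (h t) W -> nbhs h [set f : {ptws U -> V} | W (f t)].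
Proof.
move=> hW; have := @proj_continuous U (fun _ => V) t h.
by move/(_ W hW).
Qed.

Lemma ptws_cvg (U : Type) (V : topologicalType) (F : set_system {ptws U -> V}) (h : {ptws U -> V}) :
  Filter F -> (forall t W, nbhs (h t) W -> F [set f : {ptws U -> V} | W (f t)]) -> F --> h.
Proof.
move=> FF H; apply/cvg_sup => t.
move=> A; rewrite nbhsE => -[B [Bop Bh] BA].
case: Bop => C Cop CB; rewrite nbhs_filterE. suff FB : F B by exact: (filterS BA FB). rewrite -CB.
apply: H; apply: open_nbhs_nbhs; split => //; by rewrite -CB in Bh.
Qed.
Lemma ptws_closure_fin (U : eqType) (V : topologicalType) (A : set {ptws U -> V}) (h : {ptws U -> V}) :
  (forall s : seq U, exists f, A f /\ forall x, x \in s -> f x = h x) -> closure A h.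
Proof.
move=> H; rewrite closureEcvg.
pose B := fun s : seq U => [set f : {ptws U -> V} | A f /\ forall x, x \in s -> f x = h x].
have FF : Filter (filter_from setT B).
  apply: filter_fromT_filter; first by exists [::].
  move=> i j; exists (i ++ j) => f [Af Hf]; split; split => // x xi; apply: Hf;
    by rewrite mem_cat xi ?orbT.
exists (filter_from setT B); first by apply: filter_from_proper => s _; have [f] := H s; exists f.
split.
  apply: ptws_cvg => t W tW; exists [:: t] => // f [_ Hf] /=.
  by rewrite Hf ?mem_head //; exact: nbhs_singleton.
by move=> P AP; exists [::] => // f [Af _]; exact: AP.
Qed.
Lemma ptws_box_fin (n : nat) (X : topologicalType) (U : set {ptws 'I_n -> X}) (t : {ptws 'I_n -> X}) :
  nbhs t U -> exists O : 'I_n -> set X, (forall i, open (O i) /\ O i (t i)) /\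
    (forall s : {ptws 'I_n -> X}, (forall i, O i (s i)) -> U s).
Proof.
move=> tU.
pose D := [set O : 'I_n -> set X | forall i, open (O i) /\ O i (t i)].
pose B := fun O : 'I_n -> set X => [set s : {ptws 'I_n -> X} | forall i, O i (s i)].
have FF : Filter (filter_from D B).
  apply: filter_from_filter; first by exists (fun _ => setT) => i; split => //; exact: openT.
  move=> O1 O2 D1 D2; exists (fun i => O1 i `&` O2 i).
    move=> i; have [o1 t1] := D1 i; have [o2 t2] := D2 i; split => //; exact: openI.
  by move=> s Hs; split => i; have [] := Hs i.
have : filter_from D B --> t.
  apply: ptws_cvg => i W; rewrite nbhsE => -[C [Cop Ct] CW].
  exists (fun j => if j == i then C else setT).
    by move=> j; case: eqP => [->|_]; split => //; exact: openT.
  by move=> s /(_ i); rewrite eqxx => /CW.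
move=> /(_ U tU) [O DO BO]; exists O; split => //.
Qed.
Lemma mul_cont (G X : topologicalType) (mul : G -> G -> G) (f1 f2 : X -> G) :
  continuous (fun p : G * G => mul p.1 p.2) -> continuous f1 -> continuous f2 ->
  continuous (fun y => mul (f1 y) (f2 y)).
Proof.
move=> mc c1 c2 y; apply: continuous2_cvg; [exact: (mc (f1 y, f2 y))|exact: c1|exact: c2].
Qed.

Lemma build_fun (G X : topologicalType) (mul : G -> G -> G) (e g : G)
  (mulc : continuous (fun p : G * G => mul p.1 p.2))
  (mule : forall x, mul e x = x /\ mul x e = x)
  (reg : forall (F : set X) x, closed F -> ~ F x ->
     exists f : X -> G, continuous f /\ f x = g /\ forall y, F y -> f y = e)
  (s : seq X) (V : X -> set X) :
  uniq s -> (forall x, x \in s -> open (V x) /\ V x x) ->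
  (forall x y, x \in s -> y \in s -> x <> y -> ~ V x y) ->
  exists f : X -> G, continuous f /\ (forall x, x \in s -> f x = g) /\
    (forall y, f y <> e -> exists x, x \in s /\ V x y).
Proof.
elim: s => [|x s IH] /=.
  move=> _ _ _; exists (fun _ => e); split; first exact: cst_continuous.
  by split => // y [].
move=> /andP[xs us] HV Hsep.
have [f1 [c1 [f1s f1e]]] : exists f : X -> G, continuous f /\ (forall x, x \in s -> f x = g) /\
    (forall y, f y <> e -> exists x, x \in s /\ V x y).
  apply: IH => // [z zs|z y zs ys]; [apply: HV|apply: Hsep]; by rewrite inE ?zs ?ys orbT.
have [Vo Vx] := HV x (mem_head _ _).
have [f0 [c0 [f0x f0e]]] := reg (~` V x) x (open_closedC Vo) (fun H => H Vx).
exists (fun y => mul (f0 y) (f1 y)); split; first exact: mul_cont.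
split.
  move=> z; rewrite inE => /orP[/eqP ->|zs].
    have -> : f1 x = e.
      apply: contrapT => /f1e [w [ws Vwx]].
      apply: (Hsep w x) => //; [by rewrite inE ws orbT|exact: mem_head|].
      by move=> E; move: xs; rewrite -E ws.
    by rewrite f0x (mule g).2.
  rewrite f1s // f0e ?(mule g).1 //.
  apply: (Hsep x z) => //; [exact: mem_head|by rewrite inE zs orbT|].
  by move=> E; move: xs; rewrite E zs.
move=> y H.
case: (pselect (V x y)) => Vxy; first by exists x; rewrite mem_head.
have [z [zs Vzy]] : exists z, z \in s /\ V z y.
  apply: f1e => E; apply: H; by rewrite E f0e // (mule e).1.
by exists z; rewrite inE zs orbT.
Qed.
Lemma approx (G X : topologicalType) (mul : G -> G -> G) (e g : G)
  (mulc : continuous (fun p : G * G => mul p.1 p.2))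
  (mule : forall x, mul e x = x /\ mul x e = x)
  (reg : forall (F : set X) x, closed F -> ~ F x ->
     exists f : X -> G, continuous f /\ f x = g /\ forall y, F y -> f y = e)
  (hausX : hausdorff_space X) (n : nat) (C : set (set {ptws 'I_n -> X}))
  (Copen : forall U, C U -> open U) (Ccov : forall y, exists U, C U /\ U y) (s : seq X) :
  exists f : X -> G, continuous f /\ (forall x, x \in s -> f x = g) /\
   exists l : seq (set {ptws 'I_n -> X}), (forall U, U \in l -> C U) /\
     (forall y : {ptws 'I_n -> X}, (forall i, f (y i) <> e) -> exists U, U \in l /\ U y).
Proof.
pose s' := undup s; pose m := size s'.
pose tt' := fun j : 'I_m => tnth (in_tuple s') j.
pose tk := fun (k : {ffun 'I_n -> 'I_m}) => (fun i => tt' (k i)) : {ptws 'I_n -> X}.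
have [Uf HU] := choice (fun k => Ccov (tk k)).
have [Of HO] : {Of : {ffun 'I_n -> 'I_m} -> 'I_n -> set X & forall k,
    (forall i, open (Of k i) /\ Of k i (tk k i)) /\
    (forall y : {ptws 'I_n -> X}, (forall i, Of k i (y i)) -> Uf k y)}.
  apply: (@choice _ _ (fun k (O : 'I_n -> set X) => (forall i, open (O i) /\ O i (tk k i)) /\
    (forall y : {ptws 'I_n -> X}, (forall i, O i (y i)) -> Uf k y))) => k.
  apply: ptws_box_fin; apply: open_nbhs_nbhs.
  by have [CU Uy] := HU k; split => //; apply: Copen.
pose V := fun x : X => [set y : X | (forall p : {ffun 'I_n -> 'I_m} * 'I_n, tt' (p.1 p.2) = x -> Of p.1 p.2 y) /\
   (forall j : 'I_m, tt' j <> x -> y <> tt' j)].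
have tt'_mem x : x \in s' -> exists j, tt' j = x.
  by move=> xs; have /tnthP [j ->] : x \in in_tuple s' by []; exists j.
have closed1 (z : X) : closed [set z] by apply: accessible_closed_set1; apply: hausdorff_accessible.
have Vop x : x \in s' -> open (V x) /\ V x x.
  move=> xs; split; last first.
    split => [p E|j E]; first by rewrite -E; have [/(_ p.2) [_ ]] := HO p.1.
    by move=> E'; apply: E; rewrite E'.
  rewrite openE => y [H1 H2]; rewrite /interior.
  have N1 : \forall z \near y, forall p : {ffun 'I_n -> 'I_m} * 'I_n, tt' (p.1 p.2) = x -> Of p.1 p.2 z.
    apply: filter_forall => p.
    case: (pselect (tt' (p.1 p.2) = x)) => E.
      apply: filterS (open_nbhs_nbhs (conj (proj1 ((proj1 (HO p.1)) p.2)) (H1 p E))) => z Hz _; exact: Hz.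
    by apply: nearW => z /E.
  have N2 : \forall z \near y, forall j : 'I_m, tt' j <> x -> z <> tt' j.
    apply: filter_forall => j.
    case: (pselect (tt' j = x)) => E; first by apply: nearW => z /(_ E).
    have Hy := H2 j E.
    have op : open (~` [set tt' j]) by apply: closed_openC.
    by apply: filterS (open_nbhs_nbhs (conj op Hy)) => z Hz _ Ez; apply: Hz.
  by apply: filterS (filterI N1 N2) => z [].
have Vsep x z : x \in s' -> z \in s' -> x <> z -> ~ V x z.
  move=> xs zs xz [_ H2]; have [j Ej] := tt'_mem z zs.
  by apply: (H2 j) => [E|]; [apply: xz; rewrite -E Ej|rewrite Ej].
have [f [fc [fs fcoz]]] := build_fun mulc mule reg (undup_uniq s) Vop Vsep.
exists f; split => //; split.
  by move=> x xs; apply: fs; rewrite mem_undup.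
exists [seq Uf k | k <- enum {ffun 'I_n -> 'I_m}]; split.
  by move=> U /mapP [k _ ->]; have [] := HU k.
move=> y yH.
have /choice [xf Hxf] : forall i, exists x, x \in s' /\ V x (y i) by move=> i; apply: fcoz.
have /choice [jf Hjf] : forall i, exists j, tt' j = xf i by move=> i; apply: tt'_mem; have [] := Hxf i.
pose k := [ffun i => jf i].
exists (Uf k); split; first by apply: map_f; rewrite mem_enum.
have [_ Hbox] := HO k; apply: Hbox => i.
have [_ [H1 _]] := Hxf i; apply: (H1 (k, i)) => /=.
by rewrite ffunE.
Qed.

Unset Implicit Arguments.
Theorem lemma7p3 (G : topologicalType) (mul : G -> G -> G) (inv : G -> G)
  (e : G) (X : topologicalType) :
  topological_group mul inv e -> tychonoff_space X -> Gstar_regular X e ->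
  forall K : Type, infinite_type K ->
  tightness_le (Cp_set X G) K ->
  forall n : nat, lindelof_le (power_space X n) K.
Proof.
move=> [_ mule _ [mulc _] hausG] [hausX _] [g [ge reg]] K infK tight n C Copen Ccov.
have Ccov' : forall y, exists U, C U /\ U y.
  move=> y; have : [set: power_space X n] y by [].
  by rewrite -Ccov => -[U CU Uy]; exists U.
pose Pl (f : {ptws X -> G}) (l : seq (set {ptws 'I_n -> X})) :=
  (forall U, U \in l -> C U) /\
     (forall y : {ptws 'I_n -> X}, (forall i, f (y i) <> e) -> exists U, U \in l /\ U y).
pose A := [set f : {ptws X -> G} | continuous f /\ exists l, Pl f l].
pose h := (fun _ => g) : {ptws X -> G}.
have clA : closure A h.
  apply: ptws_closure_fin => s.
  have [f [fc [fs [l Hl]]]] := approx mulc mule reg hausX Copen Ccov' s.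
  by exists f; split => //; split => //; exists l.
have [B [BA BK clB]] := tight A h (fun f Af => proj1 Af) (@cst_continuous X G g) clA.
have [k0 _] := inhabited_inf infK.
have [bK [_ bKinj]] := card_le_fun k0 BK.
have [psi psiinj] := KxN infK.
pose lf := fun f : {ptws X -> G} => match pselect (exists l, Pl f l) with
  | left ex => projT1 (cid ex) | right _ => [::] end.
have lfP f : A f -> Pl f (lf f).
  move=> [_ ex]; rewrite /lf; case: (pselect _) => [ex'|]; last by [].
  by case: (cid ex').
pose C' := [set U | exists f, B f /\ U \in lf f].
exists C'; split.
- by move=> U [f [Bf Uf]]; have [H _] := lfP f (BA f Bf); apply: H.
- pose ch := fun U : set (power_space X n) => match pselect (exists f, B f /\ U \in lf f) with
    | left ex => projT1 (cid ex) | right _ => h end.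
  have chP U : C' U -> B (ch U) /\ U \in lf (ch U).
    move=> ex; rewrite /ch; case: (pselect _) => [ex'|]; last by [].
    by case: (cid ex').
  apply: (@fun_card_le _ _ _ _ (fun U => psi (bK (ch U), index U (lf (ch U))))) => // U1 U2 H1 H2.
  move/psiinj => [E1 E2].
  have [B1 M1] := chP U1 (set_mem H1); have [B2 M2] := chP U2 (set_mem H2).
  have E : ch U1 = ch U2 by apply: bKinj; rewrite ?inE.
  by rewrite -(nth_index set0 M1) -(nth_index set0 M2) E2 E.
- apply/seteqP; split => // y _.
  have N : nbhs h [set f : {ptws X -> G} | forall i, f (y i) <> e].
    apply: (@filter_forall _ _ (fun i (f : {ptws X -> G}) => f (y i) <> e) (nbhs h)) => i.
    have op : open (~` [set e]) by apply: closed_openC; apply: accessible_closed_set1; apply: hausdorff_accessible.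
    apply: (ptws_nbhs_proj (t := y i) (W := ~` [set e])).
    by apply: open_nbhs_nbhs; split.
  have [f [Bf Nf]] := clB _ N.
  have [_ H] := lfP f (BA f Bf).
  have [U [Ul Uy]] := H y Nf.
  by exists U => //; exists f.
Qed.
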